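(* Let $A=B[x;\alpha,\delta]_p$ be a Poisson polynomial algebra over a field $k$ of characteristic zero. Assume that $\delta$ is locally nilpotent and that $\alpha\delta=\delta(\alpha+s)$ for some $s\in k^\times$. Then the rule $$\theta(b)=\sum_{n=0}^\infty \frac{1}{n!}\left(\frac{-1}{s}\right)^n\delta^n(b)x^{-n}$$ defines a $k$-algebra homomorphism $\theta:B\to B[x^{\pm1}]$, and $\{x,\theta(b)\}=\theta\alpha(b)\,x$ for all $b\in B$ (bracket computed in the Poisson Laurent polynomial algebra $B[x^{\pm1};\alpha,\delta]_p$).
   Context: If $B$ is a Poisson algebra, $\alpha$ a Poisson derivation of $B$ and $\delta$ a derivation of $B$ with $\delta(\{a,b\})=\{\delta(a),b\}+\{a,\delta(b)\}+\alpha(a)\delta(b)-\delta(a)\alpha(b)$ for $a,b\in B$, then $B[x;\alpha,\delta]_p$ is $B[x]$ with the unique Poisson bracket extending that of $B$ with $\{x,b\}=\alpha(b)x+\delta(b)$, and $B[x^{\pm1};\alpha,\delta]_p$ is the unique extension of this Poisson structure to $B[x^{\pm1}]$. A derivation $\delta$ is locally nilpotent if for each $b$ some power $\delta^N(b)=0$. *)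

(* Defs.v *)
From HB Require Import structures.
From mathcomp Require Import all_boot all_order all_algebra.
From mathcomp Require Import generic_quotient ring_quotient.
From Stdlib Require Import ClassicalEpsilon.

Set Implicit Arguments.
Unset Strict Implicit.
Unset Printing Implicit Defensive.

Import GRing.Theory.
Local Open Scope ring_scope.
Local Open Scope quotient_scope.

(* Poisson algebras.  The scalar action is passed explicitly as [sc]  *)
(* so that the same notion applies to B (a k-algebra, sc = *:%R) and  *)
(* to the Laurent ring B[x^{+-1}] (k acting through k -> B -> L).     *)
Definition is_poisson_bracket (k : fieldType) (A : comNzRingType)
    (sc : k -> A -> A) (br : A -> A -> A) : Prop :=
  [/\ (forall (c : k) a a' b, br (sc c a + a') b = sc c (br a b) + br a' b),
      (forall a b, br a b = - br b a),
      (forall a b c, br a (br b c) + br b (br c a) + br c (br a b) = 0)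
    & (forall a b c, br a (b * c) = br a b * c + b * br a c)].

Definition is_derivation (k : fieldType) (B : comAlgType k) (d : B -> B) : Prop :=
  (forall (c : k) a b, d (c *: a + b) = c *: d a + d b) /\
  (forall a b, d (a * b) = d a * b + a * d b).

Definition is_poisson_derivation (k : fieldType) (B : comAlgType k)
    (br : B -> B -> B) (a : B -> B) : Prop :=
  is_derivation a /\ (forall x y, a (br x y) = br (a x) y + br x (a y)).

(* The compatibility condition making B[x; alpha, delta]_p a Poisson algebra *)
Definition poisson_poly_data (k : fieldType) (B : comAlgType k)
    (br : B -> B -> B) (alpha delta : B -> B) : Prop :=
  [/\ is_poisson_bracket *:%R br,
      is_poisson_derivation br alpha,
      is_derivation delta
    & forall a b, delta (br a b) = br (delta a) b + br a (delta b)
                    + alpha a * delta b - delta a * alpha b].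

Definition locally_nilpotent (B : zmodType) (d : B -> B) : Prop :=
  forall b, exists N : nat, iter N d b = 0.

(* Laurent polynomial ring B[x^{+-1}] := B[x, y] / (x y - 1).         *)
(* Outer variable 'X is x, inner variable ('X)%:P is y = x^{-1}.      *)
Section Laurent.
Variable B : comNzRingType.

Definition laurent_gen : {poly {poly B}} := 'X * ('X)%:P - 1.

Definition laurent_ideal : pred {poly {poly B}} := fun p =>
  if excluded_middle_informative (exists q, p = q * laurent_gen)
  then true else false.

Lemma laurent_idealP p :
  reflect (exists q, p = q * laurent_gen) (p \in laurent_ideal).
Proof.
rewrite unfold_in /laurent_ideal.
by case: excluded_middle_informative => h; constructor.
Qed.

Lemma laurent_gen_ok (q : {poly {poly B}}) : q * laurent_gen != 1.
Proof.
apply/eqP => h.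
have q0 : q != 0 by apply: contra_eq_neq h => ->; rewrite mul0r eq_sym oner_neq0.
have eg : laurent_gen = ('X)%:P * 'X + (-1)%:P.
  by rewrite /laurent_gen mulrC polyCN.
have sg : size laurent_gen = 2%N.
  by rewrite eg size_MXaddC polyC_eq0 polyX_eq0 /= size_polyC polyX_eq0.
have lg : lead_coef laurent_gen = 'X.
  by rewrite /lead_coef sg eg coefD coefMX coefC /= coefC /= addr0.
have hs : size (q * laurent_gen) = size (1 : {poly {poly B}}) by rewrite h.
move: hs; rewrite size_proper_mul ?lg.
  by rewrite sg size_poly1 addn2 /=; move: q0; rewrite -size_poly_eq0; case: (size q).
by rewrite -size_poly_eq0 size_mulX ?lead_coef_eq0.
Qed.

Lemma laurent_ideal_closed : idealr_closed laurent_ideal.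
Proof.
split.
- by apply/laurent_idealP; exists 0; rewrite mul0r.
- apply/negP => /laurent_idealP [q hq].
  by move/eqP: (laurent_gen_ok q); rewrite -hq.
- move=> a u v /laurent_idealP [q1 ->] /laurent_idealP [q2 ->].
  by apply/laurent_idealP; exists (a * q1 + q2); rewrite mulrDl mulrA.
Qed.

End Laurent.

HB.instance Definition _ (B : comNzRingType) :=
  isIdealr.Build {poly {poly B}} (@laurent_ideal B) (@laurent_ideal_closed B).

Definition laurent (B : comNzRingType) := {ideal_quot (@laurent_ideal B : idealr _)}.
HB.instance Definition _ (B : comNzRingType) := GRing.ComNzRing.on (laurent B).
HB.instance Definition _ (B : comNzRingType) :=
  EqQuotient.on (laurent B).

Section LaurentOps.
Variable B : comNzRingType.
Local Notation L := (laurent B).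

Definition lemb (b : B) : L := \pi_L ((b%:P)%:P).
Definition lX : L := \pi_L 'X.
Definition lXinv : L := \pi_L (('X : {poly B})%:P).
End LaurentOps.

Definition theta_coef (k : fieldType) (s : k) (n : nat) : k :=
  (n`!%:R)^-1 * (- s^-1) ^+ n.

Definition theta_sum (k : fieldType) (B : comAlgType k) (s : k)
    (delta : B -> B) (N : nat) (b : B) : laurent B :=
  \sum_(n < N) lemb (theta_coef s n *: iter n delta b) * lXinv B ^+ n.

(* Main.v *)
Require Import Defs.
From HB Require Import structures.
From mathcomp Require Import all_boot all_order all_algebra.
From mathcomp Require Import generic_quotient ring_quotient.
Import GRing.Theory.
Local Open Scope ring_scope.

Section Der.
Context {k : fieldType} {B : comAlgType k} {d : B -> B}.
Hypothesis hd : is_derivation d.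

Lemma xx0 (x : B) : x = x + x -> x = 0.
Proof. by move=> h; apply: (addrI x); rewrite addr0 -h. Qed.
Lemma d0 : d 0 = 0.
Proof.
case: hd => hl _; have := hl 1 0 0; rewrite !scale1r addr0; exact: xx0.
Qed.
Lemma dD a b : d (a + b) = d a + d b.
Proof. by case: hd => hl _; rewrite -{1}[a]scale1r hl scale1r. Qed.
Lemma dZ c a : d (c *: a) = c *: d a.
Proof. by case: hd => hl _; rewrite -[c *: a]addr0 hl d0 addr0. Qed.
Lemma dM a b : d (a * b) = d a * b + a * d b.
Proof. by case: hd. Qed.
Lemma d1 : d 1 = 0.
Proof.
have := dM 1 1; rewrite !mul1r mulr1; exact: xx0.
Qed.
Lemma d_muln a m : d (a *+ m) = d a *+ m.
Proof. by elim: m => [|m IH]; rewrite ?mulr0n ?d0 // !mulrS dD IH. Qed.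
Lemma d_sum n (F : 'I_n -> B) : d (\sum_(i < n) F i) = \sum_(i < n) d (F i).
Proof.
elim: n F => [|n IH] F; first by rewrite !big_ord0 d0.
by rewrite !big_ord_recr /= dD IH.
Qed.
Lemma iter0 n : iter n d 0 = 0.
Proof. by elim: n => //= n ->; rewrite d0. Qed.
Lemma iterDd n a b : iter n d (a + b) = iter n d a + iter n d b.
Proof. by elim: n => //= n ->; rewrite dD. Qed.
Lemma iterZ n c a : iter n d (c *: a) = c *: iter n d a.
Proof. by elim: n => //= n ->; rewrite dZ. Qed.
Lemma iter1 n : iter n.+1 d 1 = 0.
Proof. by elim: n => [|n IH]; rewrite /= ?d1 // -iterS IH d0. Qed.
Lemma iter_ge N n b : iter N d b = 0 -> (N <= n)%N -> iter n d b = 0.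
Proof.
move=> h le; rewrite -(subnK le) iterD h; exact: iter0.
Qed.

Lemma leib n a b :
  iter n d (a * b) = \sum_(i < n.+1) (iter i d a * iter (n - i) d b) *+ 'C(n, i).
Proof.
elim: n => [|n IH]; first by rewrite big_ord1 /= mulr1n.
rewrite iterS IH d_sum.
under eq_bigr => i _ do rewrite d_muln dM mulrnDl.
rewrite big_split /=.
rewrite [in RHS]big_ord_recl /= bin0 mulr1n.
under [in RHS]eq_bigr => i _ do rewrite add0n /bump /= add1n binS mulrnDr subSS.
rewrite big_split /= addrC [RHS]addrA; congr (_ + _).
rewrite big_ord_recl /= subn0 bin0 mulr1n; congr (_ + _).
rewrite [in RHS]big_ord_recr /= bin_small // mulr0n addr0.
apply: eq_bigr => i _; rewrite add0n /bump /= add1n -(subnSK (ltn_ord i)) //.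
Qed.
End Der.
Arguments iter_ge {k B d} hd {N n b}.
Local Open Scope quotient_scope.
Section S.
Variable B : comNzRingType.
Lemma lembM (a b : B) : lemb (a * b) = lemb a * lemb b.
Proof. by rewrite /lemb !polyCM rmorphM. Qed.
Lemma lembD (a b : B) : lemb (a + b) = lemb a + lemb b.
Proof. by rewrite /lemb !polyCD rmorphD. Qed.
Lemma lemb1 : lemb (1 : B) = 1.
Proof. by rewrite /lemb rmorph1. Qed.
Lemma lemb0 : lemb (0 : B) = 0.
Proof. by rewrite /lemb !polyC0 rmorph0. Qed.
Lemma lXK : lX B * lXinv B = 1.
Proof.
have -> : (1 : laurent B) = \pi_(laurent B) 1 by rewrite rmorph1.
rewrite /lX /lXinv -rmorphM; apply/eqP; rewrite -Quotient.idealrBE.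
by apply/laurent_idealP; exists 1; rewrite mul1r.
Qed.
End S.
Lemma lemb_sum (B : comNzRingType) n (F : 'I_n -> B) :
  lemb (\sum_(i < n) F i) = \sum_(i < n) lemb (F i).
Proof.
elim: n F => [|n IH] F; first by rewrite !big_ord0 lemb0.
by rewrite !big_ord_recr /= lembD IH.
Qed.
From Stdlib Require Import ClassicalEpsilon.
From mathcomp Require Import ring.

Section Main.
Variables (k : fieldType) (B : comAlgType k)
    (br : B -> B -> B) (alpha delta : B -> B) (s : k).
Hypotheses (hchar : [pchar k] =i pred0)
  (hpd : poisson_poly_data br alpha delta)
  (hnil : locally_nilpotent delta) (hs : s != 0)
  (had : forall b, alpha (delta b) = delta (alpha b + s *: b)).

Let hdel : is_derivation delta. Proof. by case: hpd. Qed.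
Let hal : is_derivation alpha. Proof. by case: hpd => _ []. Qed.

Lemma natr_neq0 n : (n%:R : k) != 0 = (n != 0%N).
Proof. by move/pcharf0P: hchar => ->. Qed.

Lemma fact_neq0 n : (n`!%:R : k) != 0.
Proof. by rewrite natr_neq0 -lt0n fact_gt0. Qed.

Lemma alpha_iter n b :
  alpha (iter n delta b) = iter n delta (alpha b + (n%:R * s) *: b).
Proof.
elim: n => [|n IH]; first by rewrite /= mul0r scale0r addr0.
rewrite iterS had IH -(iterZ hdel) -(iterDd hdel) -iterS -addrA -scalerDl.
by rewrite mulrSr mulrDl mul1r.
Qed.

Definition Nb (b : B) : nat := proj1_sig (constructive_indefinite_description _ (hnil b)).
Lemma NbP b : iter (Nb b) delta b = 0.
Proof. exact: (proj2_sig (constructive_indefinite_description _ (hnil b))). Qed.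

Definition cf n := theta_coef s n.
Definition E (b : B) (i : nat) : laurent B := lemb (cf i *: iter i delta b).
Definition PP (b : B) : {poly laurent B} := \poly_(i < Nb b) E b i.
Definition theta (b : B) : laurent B := (PP b).[lXinv B].

Lemma E_ge {N b i} : iter N delta b = 0 -> (N <= i)%N -> E b i = 0.
Proof. by move=> h le; rewrite /E (iter_ge hdel h le) scaler0 lemb0. Qed.

Lemma poly_eqN {N b} : iter N delta b = 0 -> \poly_(i < N) E b i = PP b.
Proof.
move=> h; apply/polyP => i; rewrite /PP !coef_poly.
case: ltnP => l1; case: ltnP => l2 //.
- by rewrite (E_ge (NbP b) l2).
- by rewrite (E_ge h l1).
Qed.

Lemma coef_PP b i : (PP b)`_i = E b i.
Proof.
rewrite /PP coef_poly; case: ltnP => // l; by rewrite (E_ge (NbP b) l).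
Qed.

Lemma theta_sumE N b : iter N delta b = 0 -> theta_sum s delta N b = theta b.
Proof. by move=> h; rewrite /theta -(poly_eqN h) horner_poly. Qed.

Lemma cf_bin n j : (j <= n)%N -> cf n * ('C(n, j))%:R = cf j * cf (n - j).
Proof.
move=> le; rewrite /cf /theta_coef.
have F := bin_fact le.
have h1 := fact_neq0 j; have h2 := fact_neq0 (n - j).
rewrite -F !natrM.
have -> : (- s^-1) ^+ n = (- s^-1) ^+ j * (- s^-1) ^+ (n - j) by rewrite -exprD subnKC.
have h3 : ('C(n, j)%:R : k) != 0 by rewrite natr_neq0 // -lt0n bin_gt0.
field.
by rewrite h3 h1 h2.
Qed.

Lemma PP_add a b : PP (a + b) = PP a + PP b.
Proof.
by apply/polyP => i; rewrite coefD !coef_PP /E (iterDd hdel) scalerDr lembD.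
Qed.

Lemma PP_mul a b : PP (a * b) = PP a * PP b.
Proof.
apply/polyP => i; rewrite coefM coef_PP.
under eq_bigr => j _ do rewrite !coef_PP.
rewrite /E (leib hdel) scaler_sumr lemb_sum; apply: eq_bigr => j _.
rewrite -lembM; congr lemb.
rewrite -scaler_nat scalerA -scalerAl -scalerAr scalerA.
by rewrite (cf_bin _ _ (ltnSE (ltn_ord j))).
Qed.

Lemma PP_one : PP 1 = 1.
Proof.
apply/polyP => i; rewrite coef_PP coefC /E.
case: i => [|i].
  by rewrite /= /cf /theta_coef /= invr1 mul1r scale1r lemb1.
by rewrite (iter1 hdel) scaler0 lemb0.
Qed.

Lemma PP_scal c b : PP (c *: b) = (lemb (c%:A))%:P * PP b.
Proof.
apply/polyP => i; rewrite coefCM !coef_PP /E (iterZ hdel) -lembM.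
by rewrite scalerA mulrC -scalerA -scalerAl mul1r.
Qed.

Local Notation L := (laurent B).
Local Notation x := (lX B).
Local Notation y := (lXinv B).

Lemma two_inv (z : L) : z + z = 0 -> z = 0.
Proof.
move=> h.
have h2 : (2 : k) != 0 by rewrite natr_neq0.
have e : (2^-1 : k)%:A + (2^-1)%:A = 1 :> B.
  have e2 : (2^-1 + 2^-1 : k) = 1 by field; exact: h2.
  by rewrite -scalerDl e2 scale1r.
have : lemb ((2^-1 : k)%:A) * (z + z) = 0 by rewrite h mulr0.
by rewrite mulrDr -mulrDl -lembD e lemb1 mul1r.
Qed.

Section Br.
Variable P : L -> L -> L.
Hypothesis hP : is_poisson_bracket (fun (c : k) (f : L) => lemb (c%:A) * f) P.

Lemma P_anti u v : P u v = - P v u.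
Proof. by case: hP. Qed.
Lemma P_der u v w : P u (v * w) = P u v * w + v * P u w.
Proof. by case: hP. Qed.
Lemma P_addl u v w : P (u + v) w = P u w + P v w.
Proof.
case: hP => hl _ _ _; have := hl 1 u v w.
by rewrite scale1r lemb1 !mul1r.
Qed.
Lemma P_add2 u v w : P u (v + w) = P u v + P u w.
Proof. by rewrite P_anti P_addl opprD -!P_anti. Qed.
Lemma P_0 u : P u 0 = 0.
Proof.
have := P_add2 u 0 0; rewrite addr0 => h.
by apply: (addrI (P u 0)); rewrite addr0 -h.
Qed.
Lemma P_sum u n (F : 'I_n -> L) : P u (\sum_(i < n) F i) = \sum_(i < n) P u (F i).
Proof.
elim: n F => [|n IH] F; first by rewrite !big_ord0 P_0.
by rewrite !big_ord_recr /= P_add2 IH.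
Qed.
Lemma P_xx u : P u u = 0.
Proof. by apply: two_inv; rewrite {1}P_anti addNr. Qed.
Lemma P_1 u : P u 1 = 0.
Proof.
have := P_der u 1 1; rewrite !mulr1 mul1r => h.
by apply: (addrI (P u 1)); rewrite addr0 -h.
Qed.
Lemma P_xy : P x y = 0.
Proof.
have := P_der x x y; rewrite lXK P_1 P_xx mul0r add0r => /esym h.
by rewrite -[P x y]mul1r -(lXK B) [x * y]mulrC -mulrA h mulr0.
Qed.
Lemma P_xyn n : P x (y ^+ n) = 0.
Proof.
elim: n => [|n IH]; first by rewrite expr0 P_1.
by rewrite exprS P_der P_xy IH mul0r mulr0 addr0.
Qed.
End Br.
Lemma cf_step m : cf m.+1 * (m.+1%:R * s) = - cf m.
Proof.
rewrite /cf /theta_coef factS natrM exprS.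
have h1 := fact_neq0 m.
have h2 : (m.+1%:R : k) != 0 by rewrite natr_neq0.
field; rewrite h1 hs /=; by rewrite -natr1 addrC in h2.
Qed.

Section Br2.
Variable P : L -> L -> L.
Hypothesis hP : is_poisson_bracket (fun (c : k) (f : L) => lemb (c%:A) * f) P.
Hypothesis hPx : forall b, P x (lemb b) = lemb (alpha b) * x + lemb (delta b).

Lemma P_theta b : P x (theta b) = theta (alpha b) * x.
Proof.
have hN := NbP b; set N := Nb b in hN.
have hK : iter N.+1 delta b = 0 := iter_ge hdel hN (leqnSn _).
have hKa : iter N.+1 delta (alpha b) = 0.
  have := alpha_iter N.+1 b.
  by rewrite hK (iterDd hdel) (iterZ hdel) hK scaler0 addr0 (d0 hal).
rewrite -(theta_sumE _ _ hK) -(theta_sumE _ _ hKa) /theta_sum (P_sum _ hP) mulr_suml.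
under eq_bigr => n _ do rewrite (P_der _ hP) (P_xyn _ hP) mulr0 addr0 hPx.
have tm : forall n : nat,
  (lemb (alpha (theta_coef s n *: iter n delta b)) * x +
   lemb (delta (theta_coef s n *: iter n delta b))) * y ^+ n =
  lemb (theta_coef s n *: iter n delta (alpha b)) * y ^+ n * x +
  (lemb ((cf n * (n%:R * s)) *: iter n delta b) * x * y ^+ n +
   lemb (cf n *: iter n.+1 delta b) * y ^+ n).
  move=> n; rewrite (dZ hal) alpha_iter (iterDd hdel) (iterZ hdel) (dZ hdel) -iterS.
  rewrite scalerDr lembD scalerA /cf; ring.
under eq_bigr => n _ do rewrite tm.
rewrite big_split /= -[RHS]addr0; congr (_ + _).
rewrite big_split /= big_ord_recl /= mul0r mulr0 scale0r lemb0 !mul0r add0r.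
rewrite big_ord_recr /=.
rewrite hN (d0 hdel) scaler0 lemb0 mul0r addr0 -big_split /=.
apply: big1 => m _.
rewrite /bump /= add1n add0n cf_step -mulrA exprS [x * (_ * _)]mulrA (lXK B) mul1r.
by rewrite -mulrDl -lembD scaleNr addNr lemb0 mul0r.
Qed.
End Br2.

Lemma theta_hom :
  [/\ theta 1 = 1,
      forall a b, theta (a + b) = theta a + theta b,
      forall a b, theta (a * b) = theta a * theta b
    & forall (c : k) b, theta (c *: b) = lemb (c%:A) * theta b].
Proof.
split.
- by rewrite /theta PP_one hornerC.
- by move=> a b; rewrite /theta PP_add hornerD.
- by move=> a b; rewrite /theta PP_mul hornerM.
- by move=> c b; rewrite /theta PP_scal hornerM hornerC.
Qed.

End Main.

Theorem lemma3p5 (k : fieldType) (B : comAlgType k)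
    (br : B -> B -> B) (alpha delta : B -> B) (s : k) :
  [pchar k] =i pred0 ->
  poisson_poly_data br alpha delta ->
  locally_nilpotent delta ->
  s != 0 ->
  (forall b, alpha (delta b) = delta (alpha b + s *: b)) ->
  exists theta : B -> laurent B,
    [/\ (forall b (N : nat), iter N delta b = 0 -> theta b = theta_sum s delta N b),
        (* theta is a k-algebra homomorphism *)
        [/\ theta 1 = 1,
            forall a b, theta (a + b) = theta a + theta b,
            forall a b, theta (a * b) = theta a * theta b
          & forall (c : k) b, theta (c *: b) = lemb (c%:A) * theta b]
      & (* {x, theta b} = theta(alpha b) x in B[x^{+-1}; alpha, delta]_p *)
        forall P : laurent B -> laurent B -> laurent B,
          is_poisson_bracket (fun (c : k) (f : laurent B) => lemb (c%:A) * f) P ->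
          (forall a b, P (lemb a) (lemb b) = lemb (br a b)) ->
          (forall b, P (lX B) (lemb b) = lemb (alpha b) * lX B + lemb (delta b)) ->
          forall b, P (lX B) (theta b) = theta (alpha b) * lX B].
Proof.
move=> hc hpd hnil hs had.
exists (@theta _ _ _ s hnil); split.
- by move=> b N h; symmetry; exact: (@theta_sumE _ _ _ _ _ s hpd hnil _ _ h).
- exact: (@theta_hom _ _ _ _ _ s hc hpd hnil).
- by move=> P hP _ hPx b; exact: (@P_theta _ _ _ _ _ s hc hpd hnil hs had P hP hPx b).
Qed.
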